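(* Let $\mathcal{H}_A\cong\mathbb{C}^{d_A}$, $\mathcal{H}_B\cong\mathbb{C}^{d_B}$ with computational bases. Define the diagonal operators $$O_A=\sum_{\vec a=(a,a',a'')\in\mathbb{Z}_{d_A}^3}\big(\alpha_A\delta_{a,a'}+\beta_A\big)|\vec a\rangle\langle\vec a|,\qquad O_B=\sum_{\vec b=(b,b',b'')\in\mathbb{Z}_{d_B}^3}\big(\alpha_B\delta_{b',b''}+\beta_B\big)|\vec b\rangle\langle\vec b|,$$ with $\alpha_A=d_A+1$, $\beta_A=-1$, $\alpha_B=d_B+1$, $\beta_B=-1$. Then $\Phi^3_A(O_A)=W^A_{(1,2)}$, $\Phi^3_B(O_B)=W^B_{(2,3)}$, and hence $(\Phi^3_A\otimes\Phi^3_B)(O_A\otimes O_B)=W^A_{(1,2)}\otimes W^B_{(2,3)}$.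
   Context: $\Phi^3(X)=\int_{\mathrm{Haar}}dU\,U^{\otimes3}XU^{\dagger\otimes3}$ is the 3-fold Haar twirl on $(\mathbb{C}^d)^{\otimes3}$; $\Phi^3_A\otimes\Phi^3_B$ denotes independent twirling on the $A$ and $B$ parts of $(\mathcal{H}_A\otimes\mathcal{H}_B)^{\otimes3}\cong\mathcal{H}_A^{\otimes3}\otimes\mathcal{H}_B^{\otimes3}$. $W_{(i,j)}$ is the operator swapping tensor factors $i$ and $j$ of the three copies; superscripts indicate the system. *)

(* Defs.v *)
From HB Require Import structures.
From mathcomp Require Import all_boot all_order all_algebra.
From mathcomp Require Import complex.
From mathcomp Require Import all_classical all_reals all_analysis.
Set Implicit Arguments. Unset Strict Implicit. Unset Printing Implicit Defensive.
Import Order.TTheory GRing.Theory Num.Theory.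
Local Open Scope ring_scope.
Local Open Scope classical_set_scope.

Section Twirl.
Variable R : realType.
Local Notation C := (R[i]).

Definition CMx (d : nat) := 'M[C]_d.
HB.instance Definition _ (d : nat) := Choice.on (CMx d).
HB.instance Definition _ (d : nat) := isPointed.Build (CMx d) (0%R : 'M[C]_d).

Definition conjT d (M : 'M[C]_d) : 'M[C]_d := (map_mx Num.conj M)^T.

Definition unitary_mx d (M : 'M[C]_d) : Prop := M *m conjT M = 1%:M.

(* Borel sigma-algebra on matrices: generated by the real and imaginary
   parts of the entries (coordinates of C^(d*d) = R^(2 d^2)). *)
Definition entry_sets (d : nat) : set (set (CMx d)) :=
  [set A | exists (i j : 'I_d) (B : set R), measurable B /\
     (A = (fun M : CMx d => complex.Re (M i j)) @^-1` B \/
      A = (fun M : CMx d => complex.Im (M i j)) @^-1` B)].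

Definition MxSpace (d : nat) := g_sigma_algebraType (@entry_sets d).
HB.instance Definition _ (d : nat) :=
  Measurable.copy (MxSpace d) (g_sigma_algebraType (@entry_sets d)).

(* mu is a (normalized) Haar measure on U(d): a probability measure on
   matrices, concentrated on U(d), invariant under left multiplication by
   every unitary V. *)
Definition is_Haar (d : nat) (mu : probability (MxSpace d) R) : Prop :=
  mu [set M : MxSpace d | unitary_mx M] = 1%E /\
  forall (V : 'M[C]_d), unitary_mx V ->
    forall A : set (MxSpace d), measurable A ->
      mu ((fun M : MxSpace d => V *m M) @^-1` A) = mu A.

Definition cint (d : nat) (mu : probability (MxSpace d) R)
    (f : MxSpace d -> C) : C :=
  Complex (Rintegral mu setT (fun x => complex.Re (f x)))
          (Rintegral mu setT (fun x => complex.Im (f x))).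

(* computational basis of (C^d)^{(x)3}: triples (a, a', a'') *)
Definition idx3 (d : nat) := ('I_d * 'I_d * 'I_d)%type.

(* an operator on a space with computational basis indexed by I is given
   by its matrix entries <x|X|y> *)
Definition op (I : Type) := I -> I -> C.

Definition tens3 d (U : 'M[C]_d) : op (idx3 d) :=
  fun x y => U x.1.1 y.1.1 * U x.1.2 y.1.2 * U x.2 y.2.

Definition kron (I J : Type) (X : op I) (Y : op J) : op (I * J) :=
  fun x y => X x.1 y.1 * Y x.2 y.2.

Definition twirl3 d (mu : probability (MxSpace d) R) (X : op (idx3 d))
  : op (idx3 d) :=
  fun x y => cint mu (fun U : MxSpace d =>
    \sum_(z : idx3 d) \sum_(w : idx3 d)
       tens3 U x z * X z w * Num.conj (tens3 U y w)).

Definition twirl3_AB dA dB (muA : probability (MxSpace dA) R)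
    (muB : probability (MxSpace dB) R) (Y : op (idx3 dA * idx3 dB))
  : op (idx3 dA * idx3 dB) :=
  fun x y => cint muA (fun U : MxSpace dA => cint muB (fun V : MxSpace dB =>
    \sum_(z : idx3 dA * idx3 dB) \sum_(w : idx3 dA * idx3 dB)
       (tens3 U x.1 z.1 * tens3 V x.2 z.2) * Y z w *
       Num.conj (tens3 U y.1 w.1 * tens3 V y.2 w.2))).

Definition W12 d : op (idx3 d) :=
  fun x y => if x == (y.1.2, y.1.1, y.2) then 1 else 0.
Definition W23 d : op (idx3 d) :=
  fun x y => if x == (y.1.1, y.2, y.1.2) then 1 else 0.

Definition O_A d : op (idx3 d) :=
  fun x y => if x == y then
     ((d.+1)%:R * (if x.1.1 == x.1.2 then 1 else 0) - 1) else 0.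
Definition O_B d : op (idx3 d) :=
  fun x y => if x == y then
     ((d.+1)%:R * (if x.1.2 == x.2 then 1 else 0) - 1) else 0.

End Twirl.

(* Main.v *)
Require Import Defs.
From HB Require Import structures.
From mathcomp Require Import all_boot all_order all_algebra.
From mathcomp Require Import complex.
From mathcomp Require Import all_classical all_reals all_analysis.
From mathcomp Require Import measurable_realfun ring lra.
Set Implicit Arguments. Unset Strict Implicit. Unset Printing Implicit Defensive.
Import Order.TTheory GRing.Theory Num.Theory.
Local Open Scope ring_scope.
Local Open Scope classical_set_scope.

Section Basic.
Variable R : realType.
Local Notation C := (R[i]).

Lemma cReD (x y : C) : complex.Re (x + y) = complex.Re x + complex.Re y. Proof. by move: x y => [a b] [c e]. Qed.
Lemma cImD (x y : C) : complex.Im (x + y) = complex.Im x + complex.Im y. Proof. by move: x y => [a b] [c e]. Qed.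
Lemma cReM (x y : C) : complex.Re (x * y) = complex.Re x * complex.Re y - complex.Im x * complex.Im y.
Proof. by move: x y => [a b] [c e]. Qed.
Lemma cImM (x y : C) : complex.Im (x * y) = complex.Re x * complex.Im y + complex.Im x * complex.Re y.
Proof. by move: x y => [a b] [c e]. Qed.
Lemma cReJ (x : C) : complex.Re (Num.conj x) = complex.Re x. Proof. by case: x. Qed.
Lemma cImJ (x : C) : complex.Im (Num.conj x) = - complex.Im x. Proof. by case: x. Qed.
Lemma cReN (x : C) : complex.Re (- x) = - complex.Re x. Proof. by case: x. Qed.
Lemma cImN (x : C) : complex.Im (- x) = - complex.Im x. Proof. by case: x. Qed.
Lemma cRe0 : complex.Re (0 : C) = 0. Proof. by []. Qed.
Lemma cIm0 : complex.Im (0 : C) = 0. Proof. by []. Qed.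
Lemma cRe_sum I (s : seq I) P (F : I -> C) :
  complex.Re (\sum_(i <- s | P i) F i) = \sum_(i <- s | P i) complex.Re (F i).
Proof. exact: (big_morph _ cReD cRe0). Qed.
Lemma cIm_sum I (s : seq I) P (F : I -> C) :
  complex.Im (\sum_(i <- s | P i) F i) = \sum_(i <- s | P i) complex.Im (F i).
Proof. exact: (big_morph _ cImD cIm0). Qed.

Lemma norm_le_sq (x : R) : `|x| <= 1 + x ^+ 2.
Proof. rewrite ler_norml; apply/andP; split; nra. Qed.

End Basic.

Section Nice.
Variable R : realType.
Local Notation C := (R[i]).
Variable d : nat.
Local Notation M := (MxSpace R d).

Definition Un : set M := [set U | unitary_mx U].

Definition nice (f : M -> C) :=
  [/\ measurable_fun setT (fun U => complex.Re (f U)),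
      measurable_fun setT (fun U => complex.Im (f U)) &
      exists K : R, forall U, Un U -> `|complex.Re (f U)| <= K /\ `|complex.Im (f U)| <= K].

Lemma mRe i j : measurable_fun setT (fun U : M => complex.Re (U i j)).
Proof. move=> _ B mB; rewrite setTI; apply: sub_sigma_algebra; exists i, j, B; by split => //; left. Qed.
Lemma mIm i j : measurable_fun setT (fun U : M => complex.Im (U i j)).
Proof. move=> _ B mB; rewrite setTI; apply: sub_sigma_algebra; exists i, j, B; by split => //; right. Qed.

Lemma unitary_row (U : 'M[C]_d) i : unitary_mx U ->
  \sum_k (complex.Re (U i k) ^+ 2 + complex.Im (U i k) ^+ 2) = 1.
Proof.
move=> HU; have := congr1 (fun A : 'M[C]_d => complex.Re (A i i)) HU.
rewrite /= !mxE eqxx /= cRe_sum => <-; apply: eq_bigr => k _.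
rewrite /conjT !mxE cReM cReJ cImJ; ring.
Qed.

Lemma entry_bound (U : 'M[C]_d) i j : unitary_mx U ->
  `|complex.Re (U i j)| <= 2 /\ `|complex.Im (U i j)| <= 2.
Proof.
move=> HU; have H := unitary_row i HU.
have Hle : complex.Re (U i j) ^+ 2 + complex.Im (U i j) ^+ 2 <= 1.
  rewrite -H (bigD1 j) //= lerDl; apply: sumr_ge0 => k _.
  by apply: addr_ge0; apply: sqr_ge0.
have h1 := sqr_ge0 (complex.Re (U i j)); have h2 := sqr_ge0 (complex.Im (U i j)).
split.
  apply: le_trans (norm_le_sq _) _; lra.
apply: le_trans (norm_le_sq _) _; lra.
Qed.


Lemma nice_cst (c : C) : nice (fun=> c).
Proof.
split; try exact: measurable_cst.
exists (`|complex.Re c| + `|complex.Im c|) => U _; split.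
  by rewrite lerDl normr_ge0.
by rewrite lerDr normr_ge0.
Qed.

Lemma nice_entry i j : nice (fun U : M => U i j).
Proof. by split; [exact: mRe | exact: mIm | exists 2 => U HU; exact: entry_bound]. Qed.

Lemma nice_add f g : nice f -> nice g -> nice (fun U => f U + g U).
Proof.
move=> [mf1 mf2 [Kf Hf]] [mg1 mg2 [Kg Hg]]; split.
- under eq_fun do rewrite cReD; exact: measurable_funD.
- under eq_fun do rewrite cImD; exact: measurable_funD.
exists (Kf + Kg) => U HU; have [h1 h2] := Hf U HU; have [h3 h4] := Hg U HU.
rewrite cReD cImD; split; apply: le_trans (ler_normD _ _) _; exact: lerD.
Qed.

Lemma nice_opp f : nice f -> nice (fun U => - f U).
Proof.
move=> [mf1 mf2 [Kf Hf]]; split.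
- under eq_fun do rewrite cReN; exact: measurableT_comp.
- under eq_fun do rewrite cImN; exact: measurableT_comp.
exists Kf => U HU; have [h1 h2] := Hf U HU.
by move: h1 h2; case: (f U) => a b /= h1 h2; rewrite !normrN.
Qed.

Lemma bnd_mul (a b c e Ka Kb : R) : `|a| <= Ka -> `|b| <= Kb -> `|c| <= Ka -> `|e| <= Kb ->
  `|a * b - c * e| <= Ka * Kb + Ka * Kb.
Proof.
move=> h1 h2 h3 h4; apply: le_trans (ler_normB _ _) _; rewrite !normrM.
by apply: lerD; apply: ler_pM.
Qed.

Lemma bnd_mul' (a b c e Ka Kb : R) : `|a| <= Ka -> `|b| <= Kb -> `|c| <= Ka -> `|e| <= Kb ->
  `|a * b + c * e| <= Ka * Kb + Ka * Kb.
Proof.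
move=> h1 h2 h3 h4; apply: le_trans (ler_normD _ _) _; rewrite !normrM.
by apply: lerD; apply: ler_pM.
Qed.

Lemma nice_mul f g : nice f -> nice g -> nice (fun U => f U * g U).
Proof.
move=> [mf1 mf2 [Kf Hf]] [mg1 mg2 [Kg Hg]]; split.
- under eq_fun do rewrite cReM; apply: measurable_funB; exact: measurable_funM.
- under eq_fun do rewrite cImM; apply: measurable_funD; exact: measurable_funM.
exists (Kf * Kg + Kf * Kg) => U HU; have [h1 h2] := Hf U HU; have [h3 h4] := Hg U HU.
by rewrite cReM cImM; split; [exact: bnd_mul | exact: bnd_mul'].
Qed.

Lemma nice_conj f : nice f -> nice (fun U => Num.conj (f U)).
Proof.
move=> [mf1 mf2 [Kf Hf]]; split.
- by under eq_fun do rewrite cReJ.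
- under eq_fun do rewrite cImJ; exact: measurableT_comp.
by exists Kf => U HU; rewrite cReJ cImJ normrN; exact: Hf.
Qed.

Lemma nice_sum I (s : seq I) (P : pred I) (F : I -> M -> C) :
  (forall i, nice (F i)) -> nice (fun U => \sum_(i <- s | P i) F i U).
Proof.
move=> HF; elim: s => [|a s IH].
  have -> : (fun U => \sum_(i <- [::] | P i) F i U) = fun=> 0.
    by apply/funext => U; rewrite big_nil.
  exact: nice_cst.
have -> : (fun U => \sum_(i <- a :: s | P i) F i U) =
   (fun U => (if P a then F a U else 0) + \sum_(i <- s | P i) F i U).
  by apply/funext => U; rewrite big_cons; case: (P a); rewrite ?add0r.
apply: nice_add => //; case: (P a) => //; exact: nice_cst.
Qed.

End Nice.
Arguments Un {R d}.
Arguments nice {R d}.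

Section Int.
Variable R : realType.
Local Notation C := (R[i]).
Variable d : nat.
Local Notation M := (MxSpace R d).

Lemma complexP (x y : C) : complex.Re x = complex.Re y -> complex.Im x = complex.Im y -> x = y.
Proof. by case: x; case: y => ? ? ? ? /= -> ->. Qed.

Lemma conjT_mul (A B : 'M[C]_d) : conjT (A *m B) = conjT B *m conjT A.
Proof. by rewrite /conjT map_mxM trmx_mul. Qed.

Lemma conjTK (A : 'M[C]_d) : conjT (conjT A) = A.
Proof. by apply/matrixP => i j; rewrite /conjT !mxE conjCK. Qed.

Lemma unitaryC (V : 'M[C]_d) : unitary_mx V -> conjT V *m V = 1%:M.
Proof. exact: mulmx1C. Qed.

Lemma unitaryM (V U : 'M[C]_d) : unitary_mx V -> unitary_mx U -> unitary_mx (V *m U).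
Proof.
rewrite /unitary_mx => hV hU.
by rewrite conjT_mul mulmxA -(mulmxA V) hU mulmx1 hV.
Qed.

Lemma unitaryT (V : 'M[C]_d) : unitary_mx V -> unitary_mx (conjT V).
Proof. by move=> hV; rewrite /unitary_mx conjTK unitaryC. Qed.

Lemma unitaryM_inv (V U : 'M[C]_d) : unitary_mx V -> unitary_mx (V *m U) -> unitary_mx U.
Proof.
move=> hV hVU; have -> : U = conjT V *m (V *m U) by rewrite mulmxA unitaryC // mul1mx.
exact: unitaryM (unitaryT hV) hVU.
Qed.

Lemma nice_mulmx (V : 'M[C]_d) i j : nice (fun U : M => (V *m U) i j).
Proof.
under eq_fun do rewrite mxE.
apply: nice_sum => k; apply: nice_mul; [exact: nice_cst | exact: nice_entry].
Qed.

Lemma nice_gram i j : nice (fun U : M => (U *m conjT U) i j).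
Proof.
under eq_fun do rewrite mxE.
apply: nice_sum => k; apply: nice_mul; first exact: nice_entry.
under eq_fun do rewrite /conjT !mxE.
apply: nice_conj; exact: nice_entry.
Qed.

Lemma mulmx_meas (V : 'M[C]_d) : measurable_fun setT (fun U : M => (V *m U : M)).
Proof.
eapply measurability; first reflexivity.
move=> _ [A [i [j [B [mB [->|->]]]]] <-].
- by have [m1 _ _] := nice_mulmx V i j; exact: m1 measurableT B mB.
- by have [_ m2 _] := nice_mulmx V i j; exact: m2 measurableT B mB.
Qed.

Lemma mUn : measurable (Un : set M).
Proof.
have -> : (Un : set M) = \bigcap_(p in [set: 'I_d * 'I_d])
   ([set U : M | complex.Re ((U *m conjT U) p.1 p.2) = complex.Re ((1%:M : 'M[C]_d) p.1 p.2)] `&`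
    [set U : M | complex.Im ((U *m conjT U) p.1 p.2) = complex.Im ((1%:M : 'M[C]_d) p.1 p.2)]).
  apply/seteqP; split => U.
  - by move=> hU [i j] _; rewrite /= hU.
  - move=> H; apply/matrixP => i j; have [h1 h2] := H (i, j) I; exact: complexP.
apply: fin_bigcap_measurable; first exact: finite_finset.
move=> [i j] _; have [m1 m2 _] := nice_gram i j; apply: measurableI.
- by rewrite -[X in measurable X]setTI; exact: m1 measurableT _ (measurable_set1 _).
- by rewrite -[X in measurable X]setTI; exact: m2 measurableT _ (measurable_set1 _).
Qed.

Variable mu : probability M R.
Hypothesis Hmu : is_Haar mu.

Lemma muUn : mu Un = 1%E. Proof. exact: Hmu.1. Qed.

Definition bnd (g : M -> R) := measurable_fun setT g /\ exists K, forall U, Un U -> `|g U| <= K.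

Lemma bnd_int g : bnd g -> mu.-integrable Un (EFin \o g).
Proof.
move=> [mg [K HK]]; apply: measurable_bounded_integrable => //.
- exact: mUn.
- by apply: le_lt_trans (probability_le1 _ mUn) _; exact: ltry.
- exact: (measurable_funTS mg).
- exists K; split; first exact: num_real.
  by move=> y Ky x Ux; apply: le_trans (HK x Ux) (ltW Ky).
Qed.

Lemma Rint_Un g : measurable_fun setT g -> Rintegral mu setT g = Rintegral mu Un g.
Proof.
move=> mg; rewrite /Rintegral -(setUv Un) integral_setU //.
- rewrite (@null_set_integral _ _ _ _ (~` Un)) ?adde0 //.
  + exact: measurableC mUn.
  + apply/measurable_EFinP; exact: measurable_funTS.
  + have h := probability_setC mu mUn; rewrite muUn subee // in h; exact: h.
- exact: mUn.
- exact: measurableC mUn.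
- rewrite setUv; apply/measurable_EFinP; exact mg.
- by apply/disj_setPCl.
Qed.


Lemma bnd_scale r g : bnd g -> bnd (fun U => r * g U).
Proof.
move=> [mg [K HK]]; split; first exact: measurable_funM.
by exists (`|r| * K) => U HU; rewrite normrM; apply: ler_wpM2l => //; exact: HK.
Qed.

Lemma nice_bnd f : nice f -> bnd (fun U => complex.Re (f U)) /\ bnd (fun U => complex.Im (f U)).
Proof. by move=> [m1 m2 [K HK]]; split; split => //; exists K => U HU; have [] := HK U HU. Qed.

Lemma nice_comp (V : 'M[C]_d) f : unitary_mx V -> nice f -> nice (fun U : M => f (V *m U)).
Proof.
move=> hV [m1 m2 [K HK]]; split.
- exact: (measurableT_comp m1 (mulmx_meas V)).
- exact: (measurableT_comp m2 (mulmx_meas V)).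
by exists K => U HU; apply: HK; exact: unitaryM.
Qed.

Lemma Rint_inv (V : 'M[C]_d) g : unitary_mx V -> bnd g ->
  Rintegral mu Un (fun U => g (V *m U)) = Rintegral mu Un g.
Proof.
move=> hV [mg [K HK]].
pose phi := fun U : M => (V *m U : M).
have mphi : measurable_fun setT phi := mulmx_meas V.
have pre : phi @^-1` Un = Un.
  apply/seteqP; split => U /=; [exact: unitaryM_inv hV | exact: unitaryM hV].
have mf : measurable_fun setT (EFin \o g) by apply/measurable_EFinP.
have intf : mu.-integrable (phi @^-1` Un) ((EFin \o g) \o phi).
  rewrite pre; apply: (@bnd_int (fun U => g (phi U))); split.
    exact: measurableT_comp mg mphi.
  by exists K => U HU; apply: HK; exact: unitaryM.
have E := integral_pushforward mphi mf intf mUn.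
rewrite (eq_measure_integral mu) in E; last first.
  by move=> A mA _; exact: Hmu.2 V hV A mA.
rewrite pre in E.
by rewrite /Rintegral E.
Qed.

Lemma cint_Un f : nice f -> cint mu f =
  Complex (Rintegral mu Un (fun U => complex.Re (f U))) (Rintegral mu Un (fun U => complex.Im (f U))).
Proof. by move=> [m1 m2 _]; rewrite /cint !Rint_Un. Qed.

Lemma cint_add f g : nice f -> nice g -> cint mu (fun U => f U + g U) = cint mu f + cint mu g.
Proof.
move=> hf hg; rewrite !cint_Un //; last exact: nice_add.
have [bf1 bf2] := nice_bnd hf; have [bg1 bg2] := nice_bnd hg.
apply: complexP => /=.
- rewrite (eq_Rintegral _ (g := fun U => complex.Re (f U) + complex.Re (g U))); last by move=> U _; rewrite cReD.
  by rewrite RintegralD //; [exact: mUn | exact: bnd_int | exact: bnd_int].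
- rewrite (eq_Rintegral _ (g := fun U => complex.Im (f U) + complex.Im (g U))); last by move=> U _; rewrite cImD.
  by rewrite RintegralD //; [exact: mUn | exact: bnd_int | exact: bnd_int].
Qed.

Lemma cint_scale (c : C) f : nice f -> cint mu (fun U => c * f U) = c * cint mu f.
Proof.
move=> hf; rewrite !cint_Un //; last by apply: nice_mul => //; exact: nice_cst.
have [bf1 bf2] := nice_bnd hf.
apply: complexP; rewrite ?cReM ?cImM /=.
- rewrite (eq_Rintegral _ (g := fun U => complex.Re c * complex.Re (f U) - complex.Im c * complex.Im (f U)));
    last by move=> U _; rewrite cReM.
  rewrite RintegralB //; [|exact: mUn | exact/bnd_int/bnd_scale | exact/bnd_int/bnd_scale].
  by rewrite !RintegralZl //; [exact: mUn | exact: bnd_int | exact: mUn | exact: bnd_int].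
- rewrite (eq_Rintegral _ (g := fun U => complex.Re c * complex.Im (f U) + complex.Im c * complex.Re (f U)));
    last by move=> U _; rewrite cImM.
  rewrite RintegralD //; [|exact: mUn | exact/bnd_int/bnd_scale | exact/bnd_int/bnd_scale].
  by rewrite !RintegralZl //; [exact: mUn | exact: bnd_int | exact: mUn | exact: bnd_int].
Qed.

Lemma cint_cst (c : C) : cint mu (fun=> c) = c.
Proof.
have E r : Rintegral mu setT (fun=> r) = r.
  rewrite Rintegral_cst //; set m := fine _.
  have -> : m = 1 by exact: (congr1 fine (probability_setT mu)).
  by rewrite mulr1.
by rewrite /cint !E; case: c.
Qed.

Lemma cint_eq f g : nice f -> nice g -> (forall U, Un U -> f U = g U) -> cint mu f = cint mu g.
Proof.
move=> hf hg H; rewrite !cint_Un //.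
by congr Complex; apply: eq_Rintegral => U /set_mem HU; rewrite H.
Qed.

Lemma cint_inv (V : 'M[C]_d) f : unitary_mx V -> nice f ->
  cint mu (fun U => f (V *m U)) = cint mu f.
Proof.
move=> hV hf; rewrite !cint_Un //; last exact: nice_comp.
have [bf1 bf2] := nice_bnd hf.
congr Complex; [exact: (Rint_inv (g := fun U => complex.Re (f U)) hV bf1) |
  exact: (Rint_inv (g := fun U => complex.Im (f U)) hV bf2)].
Qed.

Lemma cint_sum I (s : seq I) (P : pred I) (F : I -> M -> C) :
  (forall i, nice (F i)) ->
  cint mu (fun U => \sum_(i <- s | P i) F i U) = \sum_(i <- s | P i) cint mu (F i).
Proof.
move=> HF; elim: s => [|a s IH].
  have -> : (fun U => \sum_(i <- [::] | P i) F i U) = fun=> 0.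
    by apply/funext => U; rewrite big_nil.
  by rewrite cint_cst big_nil.
have -> : (fun U => \sum_(i <- a :: s | P i) F i U) =
   (fun U => (if P a then F a U else 0) + \sum_(i <- s | P i) F i U).
  by apply/funext => U; rewrite big_cons; case: (P a); rewrite ?add0r.
rewrite cint_add ?IH ?big_cons; last exact: nice_sum.
  by case: (P a); rewrite ?cint_cst ?add0r.
by case: (P a) => //; exact: nice_cst.
Qed.

End Int.

Section Alg.
Variable R : realType.
Local Notation C := (R[i]).

Lemma cRe1 : complex.Re (1 : C) = 1. Proof. by []. Qed.
Lemma cIm1 : complex.Im (1 : C) = 0. Proof. by []. Qed.

Lemma zero_of (x c : C) : x = c * x -> c <> 1 -> x = 0.
Proof.
move=> h hc; have : (1 - c) * x = 0 by rewrite mulrBl mul1r -h subrr.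
move/eqP; rewrite mulf_eq0 => /orP [|/eqP //].
by rewrite subr_eq0 => /eqP h1; exfalso; apply: hc.
Qed.

Definition ii : C := Complex 0 1.

Lemma conj_if (b : bool) : Num.conj (if b then ii else 1) = if b then - ii else 1.
Proof. by case: b; apply: complexP => //=; rewrite ?oppr0. Qed.

End Alg.
Arguments ii {R}.
Section Alg2.
Variable R : realType.
Local Notation C := (R[i]).
Lemma kill_lem (x c : C) : x = c * x ->
  (complex.Re c = 1 -> complex.Im c = 0 -> False) -> x = 0.
Proof. by move=> h H; apply: (zero_of h) => hc; apply: H; rewrite hc. Qed.

Lemma key (x : C) (e a1 a2 b1 b2 : bool) :
  x = (ii * (if e then ii else 1) * (if a1 then - ii else 1) * (if a2 then - ii else 1)) * x ->
  x = ((if e then ii else 1) * ii * (if b1 then - ii else 1) * (if b2 then - ii else 1)) * x ->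
  (e -> a1 = b1 /\ a2 = b2) -> (~~ e -> ~~ (a1 && b1) /\ ~~ (a2 && b2)) ->
  ~~ ((a1 && b2) || (a2 && b1)) -> x = 0.
Proof.
case: e; case: a1; case: a2; case: b1; case: b2 => h1 h2 c1 c2 nm;
  first [by apply: (kill_lem h1); clear -R; rewrite ?cReM ?cImM ?cReN ?cImN ?cRe1 ?cIm1 /= => ? ?; lra
   | by apply: (kill_lem h2); clear -R; rewrite ?cReM ?cImM ?cReN ?cImN ?cRe1 ?cIm1 /= => ? ?; lra | by move: nm | by case: (c1 isT) | by case: (c2 isT)].
Qed.

End Alg2.

Section Core.
Variable R : realType.
Local Notation C := (R[i]).
Variable d : nat.
Local Notation M := (MxSpace R d).
Variable mu : probability M R.
Hypothesis Hmu : is_Haar mu.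

Definition T4 (k1 k2 l1 l2 : 'I_d) (U : M) : C :=
  \sum_a U k1 a * U k2 a * Num.conj (U l1 a) * Num.conj (U l2 a).
Definition F4 k1 k2 l1 l2 := cint mu (T4 k1 k2 l1 l2).

Lemma nice_T4 k1 k2 l1 l2 : nice (T4 k1 k2 l1 l2).
Proof.
rewrite /T4; apply: nice_sum => a.
by repeat apply: nice_mul; try apply: nice_conj; exact: nice_entry.
Qed.

Lemma T4_symk k1 k2 l1 l2 : T4 k1 k2 l1 l2 = T4 k2 k1 l1 l2.
Proof. by apply/funext => U; apply: eq_bigr => a _; ring. Qed.
Lemma T4_syml k1 k2 l1 l2 : T4 k1 k2 l1 l2 = T4 k1 k2 l2 l1.
Proof. by apply/funext => U; apply: eq_bigr => a _; ring. Qed.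

Lemma sum_deltal (g : 'I_d -> C) k : \sum_l (l == k)%:R * g l = g k.
Proof.
rewrite (bigD1 k) //= eqxx mul1r big1 ?addr0 // => l /negbTE ->.
by rewrite mul0r.
Qed.
Lemma sum_deltar (g : 'I_d -> C) k : \sum_l (k == l)%:R * g l = g k.
Proof. by under eq_bigr do rewrite eq_sym; exact: sum_deltal. Qed.

Definition ph (j : 'I_d) (z : C) (k : 'I_d) : C := if k == j then z else 1.
Definition Dmx j z : 'M[C]_d := \matrix_(k, l) ((k == l)%:R * ph j z k).

Lemma Dmx_mul j z (U : 'M[C]_d) k a : (Dmx j z *m U) k a = ph j z k * U k a.
Proof.
rewrite mxE (eq_bigr (fun l => (k == l)%:R * (ph j z k * U l a))) ?sum_deltar //.
by move=> l _; rewrite mxE mulrA.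
Qed.

Lemma Dmx_unitary j z : z * Num.conj z = 1 -> unitary_mx (Dmx j z).
Proof.
move=> hz; apply/matrixP => k m; rewrite Dmx_mul /conjT !mxE rmorphM rmorph_nat.
have [->|ne] := eqVneq k m; first by rewrite mul1r /ph; case: (m == j); rewrite ?rmorph1 ?mulr1.
by rewrite mul0r mulr0.
Qed.

Lemma F4_phase j z : z * Num.conj z = 1 -> forall k1 k2 l1 l2,
  F4 k1 k2 l1 l2 = (ph j z k1 * ph j z k2 * Num.conj (ph j z l1) * Num.conj (ph j z l2)) * F4 k1 k2 l1 l2.
Proof.
move=> hz k1 k2 l1 l2.
have E : cint mu (fun U => T4 k1 k2 l1 l2 (Dmx j z *m U)) = cint mu (T4 k1 k2 l1 l2).
  by apply: (cint_inv Hmu); [exact: Dmx_unitary | exact: nice_T4].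
rewrite /F4 -{1}E -(cint_scale Hmu); last exact: nice_T4.
congr (cint mu _); apply/funext => U; rewrite /T4 mulr_sumr; apply: eq_bigr => a _.
rewrite !Dmx_mul !rmorphM; ring.
Qed.

Definition matched (k1 k2 l1 l2 : 'I_d) :=
  ((k1 == l1) && (k2 == l2)) || ((k1 == l2) && (k2 == l1)).

Lemma ii_unit : ii * Num.conj ii = 1 :> C.
Proof. by apply: complexP => /=; rewrite ?cReM ?cImM /=; ring. Qed.

Lemma F4_vanish k1 k2 l1 l2 : ~~ matched k1 k2 l1 l2 -> F4 k1 k2 l1 l2 = 0.
Proof.
move=> nm.
have h1 := F4_phase k1 ii_unit k1 k2 l1 l2.
have h2 := F4_phase k2 ii_unit k1 k2 l1 l2.
rewrite /ph !conj_if in h1 h2; rewrite (eqxx k1) in h1.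
rewrite (eqxx k2) [k1 == k2]eq_sym in h2.
apply: (key h1 h2).
- by move/eqP => ->.
- move=> ne; split; apply/negP => /andP [/eqP e1 /eqP e2]; move: ne; by rewrite -e1 -e2 eqxx.
- move: nm; rewrite /matched ![k1 == _]eq_sym ![k2 == _]eq_sym.
  by [].
Qed.

End Core.

Section Rot.
Variable R : realType.
Local Notation C := (R[i]).
Variable d : nat.
Local Notation M := (MxSpace R d).

Definition al : C := Complex (3/5) 0.
Definition be : C := Complex (4/5) 0.
Lemma conj_al : Num.conj al = al. Proof. by apply: complexP => //=; rewrite oppr0. Qed.
Lemma conj_be : Num.conj be = be. Proof. by apply: complexP => //=; rewrite oppr0. Qed.
Lemma conjN_be : Num.conj (- be) = - be.
Proof. by apply: complexP; rewrite ?cReJ ?cImJ ?cImN /= ?oppr0. Qed.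
Lemma albe : al * al + be * be = 1.
Proof. apply: complexP; rewrite ?cReD ?cImD ?cReM ?cImM /=; by field. Qed.
Lemma al_neq0 : al != 0.
Proof. apply/negP => /eqP h; have := congr1 (@complex.Re _) h => /=; lra. Qed.
Lemma be_neq0 : be != 0.
Proof. apply/negP => /eqP h; have := congr1 (@complex.Re _) h => /=; lra. Qed.

Lemma conj_lin (a b : C) : Num.conj (al * a + be * b) = al * Num.conj a + be * Num.conj b.
Proof.
apply: complexP; rewrite ?cReJ ?cImJ ?cReD ?cImD ?cReM ?cImM ?cReJ ?cImJ /=; ring.
Qed.

Lemma sum2 (a b : C) (p q : 'I_d) (h : 'I_d -> C) :
  \sum_l (a * (l == p)%:R + b * (l == q)%:R) * h l = a * h p + b * h q.
Proof.
transitivity (\sum_l ((l == p)%:R * (a * h l) + (l == q)%:R * (b * h l))).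
  by apply: eq_bigr => l _; ring.
by rewrite big_split /= !sum_deltal.
Qed.

Variables x x' : 'I_d.
Hypothesis hx : x != x'.

Definition Gmx : 'M[C]_d := \matrix_(k, l)
  (if k == x then al * (l == x)%:R + be * (l == x')%:R
   else if k == x' then - be * (l == x)%:R + al * (l == x')%:R else (k == l)%:R).

Lemma G_sum k (h : 'I_d -> C) : \sum_l Gmx k l * h l =
  if k == x then al * h x + be * h x' else if k == x' then - be * h x + al * h x' else h k.
Proof.
under eq_bigr do rewrite mxE.
case: (k == x); first exact: sum2.
case: (k == x'); first exact: sum2.
exact: sum_deltar.
Qed.

Lemma G_unitary : unitary_mx Gmx.
Proof.
have hxx' := negbTE hx; have hx'x : (x' == x) = false by rewrite eq_sym.
apply/matrixP => k m; rewrite [LHS]mxE G_sum /conjT !mxE.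
case: (eqVneq k x) => [ekx|nkx]; [subst k|case: (eqVneq k x') => [ekx'|nkx']; [subst k|]];
  case: (eqVneq m x) => [emx|nmx]; try subst m; try (case: (eqVneq m x') => [emx'|nmx']; [subst m|]);
  rewrite ?eqxx ?hxx' ?hx'x ?(negbTE nkx) ?(negbTE nkx') ?(negbTE nmx) ?(negbTE nmx') //=.
9: by rewrite rmorph_nat eq_sym.
all: rewrite ?mulr1 ?mulr0 ?addr0 ?add0r ?rmorph0 ?conj_al ?conj_be ?conjN_be ?mulr0 ?addr0 //.
all: first [ring | rewrite -[RHS]albe; ring].
Qed.

End Rot.

Arguments Gmx {R d}.
Arguments al {R}.
Arguments be {R}.

Section Rot2.
Variable R : realType.
Local Notation C := (R[i]).
Variable d : nat.
Local Notation M := (MxSpace R d).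
Variable mu : probability M R.
Hypothesis Hmu : is_Haar mu.
Variables x x' : 'I_d.
Hypothesis hx : x != x'.

Local Notation G := (@Gmx R d x x').

Lemma G_row (U : 'M[C]_d) a : (G *m U) x a = al * U x a + be * U x' a.
Proof. by rewrite mxE G_sum eqxx. Qed.

Definition s2 := [:: x; x'].
Definition L := [seq (p, q) | p <- [seq (k1, k2) | k1 <- s2, k2 <- s2], q <- [seq (l1, l2) | l1 <- s2, l2 <- s2]].
Definition w (k : 'I_d) : C := if k == x then al else be.
Definition cf (e : ('I_d * 'I_d) * ('I_d * 'I_d)) := w e.1.1 * w e.1.2 * w e.2.1 * w e.2.2.

Lemma expand (U : M) : T4 x x x x (G *m U) =
  \sum_(e <- L) cf e * T4 e.1.1 e.1.2 e.2.1 e.2.2 U.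
Proof.
have hx'x : (x' == x) = false by rewrite eq_sym (negbTE hx).
rewrite /L /s2 /= !big_cons big_nil /cf /w /= eqxx hx'x addr0 /T4.
rewrite !mulr_sumr -!big_split /=; apply: eq_bigr => a _.
rewrite !G_row !conj_lin; ring.
Qed.

Lemma rot_raw : F4 mu x x x x = \sum_(e <- L) cf e * F4 mu e.1.1 e.1.2 e.2.1 e.2.2.
Proof.
have E := cint_inv Hmu (G_unitary R hx) (nice_T4 R x x x x).
rewrite /F4 -E.
under eq_fun do rewrite expand.
rewrite (cint_sum Hmu _ _ (F := fun e U => cf e * T4 e.1.1 e.1.2 e.2.1 e.2.2 U)).
  by apply: eq_bigr => e _; rewrite (cint_scale Hmu) //; exact: nice_T4.
move=> e; apply: nice_mul; [exact: nice_cst | exact: nice_T4].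
Qed.

Definition Fm := F4 mu.
Lemma F4E k1 k2 l1 l2 : F4 mu k1 k2 l1 l2 = if matched k1 k2 l1 l2 then Fm k1 k2 l1 l2 else 0.
Proof. by case: ifP => // /negbT nm; rewrite (F4_vanish Hmu nm). Qed.
Lemma Fm_symk k1 k2 l1 l2 : Fm k1 k2 l1 l2 = Fm k2 k1 l1 l2.
Proof. by rewrite /Fm /F4 T4_symk. Qed.
Lemma Fm_syml k1 k2 l1 l2 : Fm k1 k2 l1 l2 = Fm k1 k2 l2 l1.
Proof. by rewrite /Fm /F4 T4_syml. Qed.

Lemma rot_eq : F4 mu x x x x = al ^+ 4 * F4 mu x x x x
   + (4%:R * al ^+ 2 * be ^+ 2) * F4 mu x x' x x' + be ^+ 4 * F4 mu x' x' x' x'.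
Proof.
have hx'x : (x' == x) = false by rewrite eq_sym (negbTE hx).
have hxx' : (x == x') = false by rewrite (negbTE hx).
rewrite {1}rot_raw /L /s2 /= !big_cons big_nil /cf /w /= eqxx hx'x.
rewrite !F4E /matched !eqxx hxx' hx'x /=.
rewrite (Fm_syml x x' x' x) (Fm_symk x' x x x') (Fm_symk x' x x' x).
rewrite (Fm_syml x x' x' x).
ring.
Qed.

End Rot2.

Section Final.
Variable R : realType.
Local Notation C := (R[i]).
Variable d : nat.
Local Notation M := (MxSpace R d).
Variable mu : probability M R.
Hypothesis Hmu : is_Haar mu.

Lemma F4_symk k1 k2 l1 l2 : F4 mu k1 k2 l1 l2 = F4 mu k2 k1 l1 l2.
Proof. by rewrite /F4 T4_symk. Qed.
Lemma F4_syml k1 k2 l1 l2 : F4 mu k1 k2 l1 l2 = F4 mu k1 k2 l2 l1.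
Proof. by rewrite /F4 T4_syml. Qed.

Lemma PQ (x x' : 'I_d) : x != x' ->
  F4 mu x x x x = F4 mu x' x' x' x' /\ F4 mu x x' x x' * 2 = F4 mu x x x x.
Proof.
move=> hx; have hx' : x' != x by rewrite eq_sym.
have E1 := rot_eq Hmu hx; have E2 := rot_eq Hmu hx'.
rewrite (F4_symk x' x) (F4_syml x x' x' x) in E2.
set P := F4 mu x x x x in E1 E2 *; set P' := F4 mu x' x' x' x' in E1 E2 *.
set Q := F4 mu x x' x x' in E1 E2 *.
have hs : (al : C) ^+ 2 + be ^+ 2 = 1 by rewrite !expr2 albe.
have z1 : P - (al ^+ 4 * P + 4%:R * al ^+ 2 * be ^+ 2 * Q + be ^+ 4 * P') = 0
  by rewrite {1}E1 subrr.
have z2 : P' - (al ^+ 4 * P' + 4%:R * al ^+ 2 * be ^+ 2 * Q + be ^+ 4 * P) = 0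
  by rewrite {1}E2 subrr.
have z3 : 1 - (al : C) ^+ 2 - be ^+ 2 = 0 by rewrite -hs; ring.
have n2 : 2%:R != 0 :> C by rewrite pnatr_eq0.
have nb : 2%:R * (be : C) ^+ 2 != 0 by apply: mulf_neq0 => //; exact: expf_neq0 (be_neq0 R).
have na : 2%:R * (al : C) ^+ 2 * be ^+ 2 != 0.
  by apply: mulf_neq0; [apply: mulf_neq0 => //; exact: expf_neq0 (al_neq0 R) | exact: expf_neq0 (be_neq0 R)].
have eP : P = P'.
  have : 2%:R * be ^+ 2 * (P - P') = 0.
    rewrite (_ : 2%:R * be ^+ 2 * (P - P') =
      (P - (al ^+ 4 * P + 4%:R * al ^+ 2 * be ^+ 2 * Q + be ^+ 4 * P'))
      - (P' - (al ^+ 4 * P' + 4%:R * al ^+ 2 * be ^+ 2 * Q + be ^+ 4 * P))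
      - (1 - al ^+ 2 - be ^+ 2) * (1 - be ^+ 2 + al ^+ 2) * (P - P')); last by ring.
    by rewrite z1 z2 z3 !mul0r !subr0.
  by move/eqP; rewrite mulf_eq0 (negbTE nb) /= subr_eq0 => /eqP.
split => //.
have : 2%:R * al ^+ 2 * be ^+ 2 * (P - Q * 2) = 0.
  rewrite (_ : 2%:R * al ^+ 2 * be ^+ 2 * (P - Q * 2) =
      (P - (al ^+ 4 * P + 4%:R * al ^+ 2 * be ^+ 2 * Q + be ^+ 4 * P'))
      - (1 - al ^+ 2 - be ^+ 2) * (1 + al ^+ 2 + be ^+ 2) * P); last by rewrite -eP; ring.
  by rewrite z1 z3 !mul0r subr0.
by move/eqP; rewrite mulf_eq0 (negbTE na) /= subr_eq0 => /eqP.
Qed.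

Lemma colsum (x : 'I_d) : \sum_x' F4 mu x x' x x' = 1.
Proof.
rewrite /F4 -(cint_sum Hmu _ _ (F := fun x' => T4 x x' x x')); last by move=> i; exact: nice_T4.
rewrite -(cint_cst mu 1).
apply: (cint_eq Hmu); [apply: nice_sum => i; exact: nice_T4 | exact: nice_cst |].
move=> U HU /=; rewrite /T4 exchange_big /=.
have col a : \sum_k U k a * Num.conj (U k a) = 1.
  have := congr1 (fun A : 'M[C]_d => A a a) (unitaryC HU).
  rewrite /= !mxE eqxx /= ?mulr1n => <-; apply: eq_bigr => k _; rewrite /conjT !mxE mulrC.
  done.
transitivity (\sum_a U x a * Num.conj (U x a) * \sum_k U k a * Num.conj (U k a)).
  apply: eq_bigr => a _; rewrite mulr_sumr; apply: eq_bigr => k _; ring.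
have := congr1 (fun A : 'M[C]_d => A x x) HU.
rewrite /= !mxE eqxx /= ?mulr1n => <-; apply: eq_bigr => a _; rewrite col mulr1 /conjT !mxE.
done.
Qed.

Lemma d_pos (x : 'I_d) : d = d.-1.+1.
Proof. by rewrite prednK // (leq_ltn_trans _ (ltn_ord x)). Qed.

Lemma P_val (x : 'I_d) : F4 mu x x x x = 2%:R / (d.+1)%:R.
Proof.
have H := colsum x.
rewrite (bigD1 x) //= in H.
have E : \sum_(x' | x' != x) F4 mu x x' x x' = (F4 mu x x x x / 2%:R) *+ d.-1.
  transitivity (\sum_(x' | x' != x) (F4 mu x x x x / 2%:R)).
    apply: eq_bigr => x' hx'.
    have nx : x != x' by rewrite eq_sym.
    have [_ <-] := PQ nx.
    by rewrite mulfK // pnatr_eq0.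
  rewrite (eq_bigl (fun i => i \in predC1 x)); last by move=> i; rewrite inE.
  by rewrite sumr_const cardC1 card_ord.
rewrite E in H.
have nd : (d.+1)%:R != 0 :> C by rewrite pnatr_eq0.
apply: (mulIf nd); rewrite mulfVK //.
set P := F4 mu x x x x in H *.
rewrite -mulr_natr in H.
have e : (d.+1)%:R = (d.-1)%:R + 2%:R :> C by rewrite {1}(d_pos x) -natrD addn2.
rewrite e.
have n2 : 2%:R != 0 :> C by rewrite pnatr_eq0.
apply/eqP; rewrite -subr_eq0; apply/eqP.
rewrite (_ : P * ((d.-1)%:R + 2%:R) - 2%:R = 2%:R * ((P + P / 2%:R * (d.-1)%:R) - 1)).
  by rewrite H subrr mulr0.
by field.
Qed.

Lemma Q_val (x x' : 'I_d) : x != x' -> F4 mu x x' x x' = 1 / (d.+1)%:R.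
Proof.
move=> hx; have [_ H] := PQ hx; rewrite P_val in H.
have n2 : 2%:R != 0 :> C by rewrite pnatr_eq0.
have nd : (d.+1)%:R != 0 :> C by rewrite pnatr_eq0.
apply: (mulIf n2); rewrite H; by field.
Qed.

Lemma F4_formula k1 k2 l1 l2 : F4 mu k1 k2 l1 l2 =
  (((k1 == l1) && (k2 == l2))%:R + ((k1 == l2) && (k2 == l1))%:R) / (d.+1)%:R.
Proof.
have [m|nm] := boolP (matched k1 k2 l1 l2); last first.
  rewrite (F4_vanish Hmu nm); move: nm; rewrite /matched negb_or.
  by move=> /andP [/negbTE -> /negbTE ->]; rewrite add0r mul0r.
move: m; rewrite /matched => /orP [] /andP [/eqP e1 /eqP e2]; subst l1 l2.
- have [e|ne] := eqVneq k1 k2.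
    by subst k2; rewrite eqxx /= P_val -natrD.
  have ne' : k2 != k1 by rewrite eq_sym.
  by rewrite !eqxx ?(negbTE ne) ?(negbTE ne') /= Q_val // addr0.
- have [e|ne] := eqVneq k1 k2.
    by subst k2; rewrite eqxx /= P_val -natrD.
  have ne' : k2 != k1 by rewrite eq_sym.
  by rewrite F4_syml !eqxx ?(negbTE ne) ?(negbTE ne') /= Q_val // add0r.
Qed.

End Final.

Section Twirl.
Variable R : realType.
Local Notation C := (R[i]).

Lemma sum_pair (I J : finType) (F : I * J -> C) : \sum_z F z = \sum_i \sum_j F (i, j).
Proof. by rewrite pair_bigA; apply: eq_bigr => -[i j]. Qed.

Lemma sum_if (I : finType) (z : I) (a : C) (b : C) (g : I -> C) :
  \sum_w a * (if z == w then b else 0) * g w = a * b * g z.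
Proof.
rewrite (bigD1 z) //= eqxx big1 ?addr0 // => w; rewrite eq_sym => /negbTE ->.
by rewrite mulr0 mul0r.
Qed.

Lemma sum_if1 (I : finType) (z : I) (g : I -> C) :
  \sum_w g w * (if z == w then 1 else 0) = g z.
Proof.
rewrite (bigD1 z) //= eqxx mulr1 big1 ?addr0 // => w; rewrite eq_sym => /negbTE ->.
by rewrite mulr0.
Qed.

Lemma conjM (a b : C) : Num.conj (a * b) = Num.conj a * Num.conj b.
Proof. exact: rmorphM. Qed.

Variable d : nat.
Local Notation M := (MxSpace R d).

Lemma rowdot (U : 'M[C]_d) i j : unitary_mx U -> \sum_c U i c * Num.conj (U j c) = (i == j)%:R.
Proof.
move=> HU; have := congr1 (fun A : 'M[C]_d => A i j) HU.
by rewrite /= !mxE => <-; apply: eq_bigr => c _; rewrite /conjT !mxE.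
Qed.

Lemma sum3 (F : idx3 d -> C) : \sum_z F z = \sum_a \sum_b \sum_c F ((a, b), c).
Proof. by rewrite sum_pair sum_pair. Qed.

Lemma ptA (U : M) (x y : idx3 d) : unitary_mx U ->
  \sum_(z : idx3 d) \sum_(w : idx3 d) tens3 U x z * @O_A R d z w * Num.conj (tens3 U y w)
  = ((x.2 == y.2)%:R * (d.+1)%:R) * T4 x.1.1 x.1.2 y.1.1 y.1.2 U
    + (- ((x.2 == y.2)%:R * ((x.1.1 == y.1.1) && (x.1.2 == y.1.2))%:R)).
Proof.
move=> HU; under eq_bigr do rewrite /O_A sum_if.
rewrite sum3 /tens3 /=.
set k := (x.2 == y.2)%:R.
transitivity (\sum_a \sum_b (U x.1.1 a * U x.1.2 b * Num.conj (U y.1.1 a) * Num.conj (U y.1.2 b)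
    * ((d.+1)%:R * (if a == b then 1 else 0) - 1)) * k).
  apply: eq_bigr => a _; apply: eq_bigr => b _.
  rewrite /k -(rowdot _ _ HU) mulr_sumr; apply: eq_bigr => c _.
  rewrite !conjM; set t := (if a == b then _ else _); ring.
under eq_bigr do rewrite -mulr_suml.
rewrite -mulr_suml.
set d1 := (d.+1)%:R.
transitivity ((d1 * T4 x.1.1 x.1.2 y.1.1 y.1.2 U
    - (\sum_a U x.1.1 a * Num.conj (U y.1.1 a)) * (\sum_b U x.1.2 b * Num.conj (U y.1.2 b))) * k).
  congr (_ * k).
  transitivity (\sum_a (d1 * (U x.1.1 a * U x.1.2 a * Num.conj (U y.1.1 a) * Num.conj (U y.1.2 a))
      - \sum_b U x.1.1 a * U x.1.2 b * Num.conj (U y.1.1 a) * Num.conj (U y.1.2 b))).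
    apply: eq_bigr => a _.
    rewrite -(sum_if1 a (fun b => U x.1.1 a * U x.1.2 b * Num.conj (U y.1.1 a) * Num.conj (U y.1.2 b))).
    rewrite mulr_sumr -sumrB; apply: eq_bigr => b _.
    set t := (if a == b then _ else _); ring.
  rewrite sumrB -mulr_sumr /T4; congr (_ - _).
  rewrite mulr_suml; apply: eq_bigr => a _; rewrite mulr_sumr; apply: eq_bigr => b _; ring.
rewrite !rowdot //.
case: (x.1.1 == y.1.1); case: (x.1.2 == y.1.2); rewrite /= ?mulr1 ?mulr0 ?mul1r ?mul0r; ring.
Qed.

Lemma ptB (U : M) (x y : idx3 d) : unitary_mx U ->
  \sum_(z : idx3 d) \sum_(w : idx3 d) tens3 U x z * @O_B R d z w * Num.conj (tens3 U y w)
  = ((x.1.1 == y.1.1)%:R * (d.+1)%:R) * T4 x.1.2 x.2 y.1.2 y.2 U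
    + (- ((x.1.1 == y.1.1)%:R * ((x.1.2 == y.1.2) && (x.2 == y.2))%:R)).
Proof.
move=> HU; under eq_bigr do rewrite /O_B sum_if.
rewrite sum3 /tens3 /=.
set k := (x.1.1 == y.1.1)%:R.
set d1 := (d.+1)%:R.
transitivity (\sum_a U x.1.1 a * Num.conj (U y.1.1 a) * (\sum_b \sum_c
    (U x.1.2 b * U x.2 c * Num.conj (U y.1.2 b) * Num.conj (U y.2 c)
    * (d1 * (if b == c then 1 else 0) - 1)))).
  apply: eq_bigr => a _; rewrite mulr_sumr; apply: eq_bigr => b _.
  rewrite mulr_sumr; apply: eq_bigr => c _.
  rewrite !conjM; set t := (if b == c then _ else _); ring.
rewrite -mulr_suml rowdot // -/k.
transitivity (k * (d1 * T4 x.1.2 x.2 y.1.2 y.2 U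
    - (\sum_b U x.1.2 b * Num.conj (U y.1.2 b)) * (\sum_c U x.2 c * Num.conj (U y.2 c)))).
  congr (k * _).
  transitivity (\sum_b (d1 * (U x.1.2 b * U x.2 b * Num.conj (U y.1.2 b) * Num.conj (U y.2 b))
      - \sum_c U x.1.2 b * U x.2 c * Num.conj (U y.1.2 b) * Num.conj (U y.2 c))).
    apply: eq_bigr => b _.
    rewrite -(sum_if1 b (fun c => U x.1.2 b * U x.2 c * Num.conj (U y.1.2 b) * Num.conj (U y.2 c))).
    rewrite mulr_sumr -sumrB; apply: eq_bigr => c _.
    set t := (if b == c then _ else _); ring.
  rewrite sumrB -mulr_sumr /T4; congr (_ - _).
  rewrite mulr_suml; apply: eq_bigr => b _; rewrite mulr_sumr; apply: eq_bigr => c _; ring.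
rewrite !rowdot //.
case: (x.1.2 == y.1.2); case: (x.2 == y.2); rewrite /= ?mulr1 ?mulr0 ?mul1r ?mul0r; ring.
Qed.

Ltac niceT := repeat (first [apply: nice_cst | apply: nice_sum; intro | apply: nice_add
  | apply: nice_mul | apply: nice_conj | apply: nice_entry]).

Variable mu : probability M R.
Hypothesis Hmu : is_Haar mu.

Lemma nice_twA (x y : idx3 d) : nice (fun U : M =>
  \sum_(z : idx3 d) \sum_(w : idx3 d) tens3 U x z * @O_A R d z w * Num.conj (tens3 U y w)).
Proof. rewrite /tens3; niceT. Qed.
Lemma nice_twB (x y : idx3 d) : nice (fun U : M =>
  \sum_(z : idx3 d) \sum_(w : idx3 d) tens3 U x z * @O_B R d z w * Num.conj (tens3 U y w)).
Proof. rewrite /tens3; niceT. Qed.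

Lemma twA : twirl3 mu (@O_A R d) = @W12 R d.
Proof.
apply/funext => -[[x1 x2] x3]; apply/funext => -[[y1 y2] y3]; rewrite /twirl3.
rewrite (cint_eq Hmu (g := fun U => ((x3 == y3)%:R * (d.+1)%:R) * T4 x1 x2 y1 y2 U
    + (- ((x3 == y3)%:R * ((x1 == y1) && (x2 == y2))%:R)))); first last.
- by move=> U HU; rewrite ptA.
- by apply: nice_add; [apply: nice_mul; [exact: nice_cst | exact: nice_T4] | exact: nice_cst].
- exact: nice_twA.
rewrite (cint_add Hmu); [| apply: nice_mul; [exact: nice_cst | exact: nice_T4] | exact: nice_cst].
rewrite (cint_scale Hmu); last exact: nice_T4.
rewrite cint_cst.
have := F4_formula Hmu x1 x2 y1 y2; rewrite /F4 => ->.
have nd : (d.+1)%:R != 0 :> C by rewrite pnatr_eq0.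
set A := ((x1 == y1) && (x2 == y2))%:R; set B := ((x1 == y2) && (x2 == y1))%:R.
set k := (x3 == y3)%:R.
rewrite (_ : k * (d.+1)%:R * ((A + B) / (d.+1)%:R) + - (k * A) = k * B); last by field.
rewrite /W12 /= !xpair_eqE /k /B.
by case: (x1 == y2); case: (x2 == y1); case: (x3 == y3); rewrite /= ?mulr1 ?mulr0 ?mul1r ?mul0r.
Qed.

Lemma twB : twirl3 mu (@O_B R d) = @W23 R d.
Proof.
apply/funext => -[[x1 x2] x3]; apply/funext => -[[y1 y2] y3]; rewrite /twirl3.
rewrite (cint_eq Hmu (g := fun U => ((x1 == y1)%:R * (d.+1)%:R) * T4 x2 x3 y2 y3 U
    + (- ((x1 == y1)%:R * ((x2 == y2) && (x3 == y3))%:R)))); first last.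
- by move=> U HU; rewrite ptB.
- by apply: nice_add; [apply: nice_mul; [exact: nice_cst | exact: nice_T4] | exact: nice_cst].
- exact: nice_twB.
rewrite (cint_add Hmu); [| apply: nice_mul; [exact: nice_cst | exact: nice_T4] | exact: nice_cst].
rewrite (cint_scale Hmu); last exact: nice_T4.
rewrite cint_cst.
have := F4_formula Hmu x2 x3 y2 y3; rewrite /F4 => ->.
have nd : (d.+1)%:R != 0 :> C by rewrite pnatr_eq0.
set A := ((x2 == y2) && (x3 == y3))%:R; set B := ((x2 == y3) && (x3 == y2))%:R.
set k := (x1 == y1)%:R.
rewrite (_ : k * (d.+1)%:R * ((A + B) / (d.+1)%:R) + - (k * A) = k * B); last by field.
rewrite /W23 /= !xpair_eqE /k /B.
by case: (x1 == y1); case: (x2 == y3); case: (x3 == y2); rewrite /= ?mulr1 ?mulr0 ?mul1r ?mul0r.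
Qed.

End Twirl.

Section AB.
Variable R : realType.
Local Notation C := (R[i]).
Variables dA dB : nat.

Lemma factor (U : 'M[C]_dA) (V : 'M[C]_dB) (x y : idx3 dA * idx3 dB) :
  \sum_(z : idx3 dA * idx3 dB) \sum_(w : idx3 dA * idx3 dB)
       (tens3 U x.1 z.1 * tens3 V x.2 z.2) * kron (@O_A R dA) (@O_B R dB) z w *
       Num.conj (tens3 U y.1 w.1 * tens3 V y.2 w.2)
  = (\sum_(z1 : idx3 dA) \sum_(w1 : idx3 dA) tens3 U x.1 z1 * @O_A R dA z1 w1 * Num.conj (tens3 U y.1 w1))
  * (\sum_(z2 : idx3 dB) \sum_(w2 : idx3 dB) tens3 V x.2 z2 * @O_B R dB z2 w2 * Num.conj (tens3 V y.2 w2)).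
Proof.
rewrite sum_pair mulr_suml; apply: eq_bigr => z1 _.
rewrite mulr_suml.
transitivity (\sum_z2 \sum_w1 \sum_w2 (tens3 U x.1 z1 * tens3 V x.2 z2) * kron (@O_A R dA) (@O_B R dB) (z1, z2) (w1, w2) *
       Num.conj (tens3 U y.1 w1 * tens3 V y.2 w2)).
  by apply: eq_bigr => z2 _; rewrite sum_pair.
rewrite exchange_big /=; apply: eq_bigr => w1 _.
rewrite mulr_sumr; apply: eq_bigr => z2 _.
rewrite mulr_sumr; apply: eq_bigr => w2 _.
rewrite /kron /= conjM.
set a := tens3 U _ _; set b := tens3 V _ _; set c := tens3 U _ _; set e := tens3 V _ _.
set o1 := O_A _ _; set o2 := O_B _ _.
ring.
Qed.

End AB.

Theorem proposition4 (R : realType) (dA dB : nat)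
    (muA : probability (MxSpace R dA) R) (muB : probability (MxSpace R dB) R) :
  is_Haar muA -> is_Haar muB ->
  [/\ twirl3 muA (@O_A R dA) = @W12 R dA,
      twirl3 muB (@O_B R dB) = @W23 R dB &
      twirl3_AB muA muB (kron (@O_A R dA) (@O_B R dB))
        = kron (@W12 R dA) (@W23 R dB)].
Proof.
move=> HA HB; split; [exact: twA | exact: twB |].
apply/funext => x; apply/funext => y; rewrite /twirl3_AB.
transitivity (cint muA (fun U : MxSpace R dA =>
  twirl3 muB (@O_B R dB) x.2 y.2 *
  (\sum_(z1 : idx3 dA) \sum_(w1 : idx3 dA) tens3 U x.1 z1 * @O_A R dA z1 w1 * Num.conj (tens3 U y.1 w1)))).
  congr (cint muA _); apply/funext => U.
  rewrite mulrC /twirl3 -(cint_scale HB); last exact: nice_twB.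
  by congr (cint muB _); apply/funext => V; rewrite factor.
rewrite (cint_scale HA); last exact: nice_twA.
by rewrite (twB HB) -(twA HA) /kron mulrC.
Qed.
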